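(* Let $S$ be an inverse semigroup that is a separately Scott-continuous mirror semigroup, with semilattice of idempotents $\Sigma$. Then the way-below relation $\ll$ on $S$ is multiplicative if and only if the way-below relation $\prec\!\!\!\prec$ on $\Sigma$ is multiplicative.
   Context: An inverse semigroup is a semigroup $S$ in which every $s$ has a unique $s^*$ with $ss^*s=s$ and $s^*ss^*=s^*$. $\Sigma=\Sigma(S)$ is the set of idempotents (a subsemigroup). The intrinsic order is $s\leqslant t$ iff $s=t\epsilon$ for some idempotent $\epsilon$. A subset is directed if nonempty and any two elements have an upper bound in it. $S$ is a mirror semigroup if every directed subset of $\Sigma$ having a supremum in $(\Sigma,\leqslant)$ also has a supremum in $(S,\leqslant)$. $S$ is separately Scott-continuous if for every directed $D\subseteq S$ with a supremum $\bigvee D$ in $S$ and every $s\in S$, $\bigvee(Ds)$ exists in $S$ and equals $(\bigvee D)s$. In a poset, $x$ is way-below $y$ if for every directed subset $D$ that has a supremum with $y\leqslant \sup D$, there is $d\in D$ with $x\leqslant d$. $\ll$ denotes the way-below relation of $(S,\leqslant)$ and $\prec\!\!\!\prec$ that of $(\Sigma,\leqslant)$. A way-below relation $R$ on a semigroup is multiplicative if $s\,R\,t$ and $s'\,R\,t'$ imply $ss'\,R\,tt'$. *)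

(* Defs.v *)
Set Implicit Arguments.

Section InvSemigroup.
Variable S : Type.
Variable mul : S -> S -> S.

Definition is_inverse_semigroup : Prop :=
  (forall a b c, mul a (mul b c) = mul (mul a b) c) /\
  (forall s, exists! t, mul (mul s t) s = s /\ mul (mul t s) t = t).

Definition idempotent (e : S) : Prop := mul e e = e.

Definition ileq (s t : S) : Prop := exists e, idempotent e /\ s = mul t e.

Definition directed (D : S -> Prop) : Prop :=
  (exists x, D x) /\
  (forall x y, D x -> D y -> exists z, D z /\ ileq x z /\ ileq y z).

Definition is_sup_in (P D : S -> Prop) (x : S) : Prop :=
  P x /\ (forall d, D d -> ileq d x) /\
  (forall y, P y -> (forall d, D d -> ileq d y) -> ileq x y).

Definition way_below_in (P : S -> Prop) (x y : S) : Prop :=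
  forall D : S -> Prop, (forall d, D d -> P d) -> directed D ->
  forall s, is_sup_in P D s -> ileq y s -> exists d, D d /\ ileq x d.

Definition allS : S -> Prop := fun _ => True.

Definition way_below (x y : S) : Prop := way_below_in allS x y.
Definition way_below_idem (x y : S) : Prop := way_below_in idempotent x y.

Definition multiplicative_on (P : S -> Prop) (R : S -> S -> Prop) : Prop :=
  forall s t s' t', P s -> P t -> P s' -> P t' ->
  R s t -> R s' t' -> R (mul s s') (mul t t').

Definition mirror_semigroup : Prop :=
  forall D : S -> Prop, (forall d, D d -> idempotent d) -> directed D ->
  (exists x, is_sup_in idempotent D x) -> exists y, is_sup_in allS D y.

Definition separately_scott_continuous : Prop :=
  forall D : S -> Prop, directed D -> forall x, is_sup_in allS D x ->
  forall s, is_sup_in allS (fun y => exists d, D d /\ y = mul d s) (mul x s).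

End InvSemigroup.

(* Main.v *)
Require Import Defs.
From Stdlib Require Import ClassicalEpsilon.

Definition inv {S : Type} {m : S -> S -> S} (H : is_inverse_semigroup m) (s : S) : S :=
  proj1_sig (constructive_indefinite_description
    (fun t => m (m s t) s = s /\ m (m t s) t = t)
    (match proj2 H s with ex_intro _ t (conj Ht _) => ex_intro _ t Ht end)).



Lemma assoc {S} {m : S -> S -> S} (H : is_inverse_semigroup m) a b c :
  m a (m b c) = m (m a b) c.
Proof. exact (proj1 H a b c). Qed.

Lemma inv_spec {S} {m : S -> S -> S} (H : is_inverse_semigroup m) s :
  m (m s (inv H s)) s = s /\ m (m (inv H s) s) (inv H s) = inv H s.
Proof. unfold inv. destruct (constructive_indefinite_description _ _) as [t Ht]. exact Ht. Qed.

Lemma inv_l1 {S} {m : S -> S -> S} (H : is_inverse_semigroup m) s :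
  m (m s (inv H s)) s = s.
Proof. apply (inv_spec H s). Qed.
Lemma inv_l2 {S} {m : S -> S -> S} (H : is_inverse_semigroup m) s :
  m (m (inv H s) s) (inv H s) = inv H s.
Proof. apply (inv_spec H s). Qed.

Lemma inv_uniq {S} {m : S -> S -> S} (H : is_inverse_semigroup m) s t :
  m (m s t) s = s -> m (m t s) t = t -> t = inv H s.
Proof.
  intros A B. destruct (proj2 H s) as [u [Hu Hun]]. pose proof (inv_spec H s) as [C D].
  transitivity u; [symmetry; apply Hun; auto | apply Hun; auto].
Qed.

Lemma l1' {S} {m : S -> S -> S} (H : is_inverse_semigroup m) x s :
  m (m (m x s) (inv H s)) s = m x s.
Proof.
  assert (E : m (m (m x s) (inv H s)) s = m x (m (m s (inv H s)) s))
    by (rewrite !(assoc H); reflexivity).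
  rewrite E, inv_l1. reflexivity.
Qed.
Lemma l2' {S} {m : S -> S -> S} (H : is_inverse_semigroup m) x s :
  m (m (m x (inv H s)) s) (inv H s) = m x (inv H s).
Proof.
  assert (E : m (m (m x (inv H s)) s) (inv H s) = m x (m (m (inv H s) s) (inv H s)))
    by (rewrite !(assoc H); reflexivity).
  rewrite E, inv_l2. reflexivity.
Qed.

Lemma idem_r {S} {m : S -> S -> S} (H : is_inverse_semigroup m) x f :
  idempotent m f -> m (m x f) f = m x f.
Proof. intro Hf. rewrite <- (assoc H). unfold idempotent in Hf. rewrite Hf. reflexivity. Qed.

Lemma idem_inv {S} {m : S -> S -> S} (H : is_inverse_semigroup m) e :
  idempotent m e -> inv H e = e.
Proof. intro He. symmetry. apply inv_uniq; unfold idempotent in He; rewrite !He; reflexivity. Qed.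

Lemma inv_inv {S} {m : S -> S -> S} (H : is_inverse_semigroup m) s :
  inv H (inv H s) = s.
Proof. symmetry. apply inv_uniq; [apply inv_l2 | apply inv_l1]. Qed.

Lemma idem_mul {S} {m : S -> S -> S} (H : is_inverse_semigroup m) e f :
  idempotent m e -> idempotent m f -> idempotent m (m e f).
Proof.
  intros He Hf.
  pose proof (inv_spec H (m e f)) as [H1 H2].
  pose proof (inv_uniq H (m e f)) as U.
  remember (inv H (m e f)) as x eqn:Ex0.
  rewrite (assoc H) in H1. rewrite !(assoc H) in H2.
  assert (K : m (m (m (m (m f x) e) f) x) e = m (m f x) e).
  { assert (E : m (m (m (m f x) e) f) x = m f (m (m (m x e) f) x))
      by (rewrite !(assoc H); reflexivity).
    rewrite E, H2. reflexivity. }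
  assert (Hx : m (m f x) e = x).
  { apply U.
    - rewrite !(assoc H). rewrite (idem_r H _ _ Hf), (idem_r H _ _ He). exact H1.
    - rewrite !(assoc H). rewrite (idem_r H _ _ Hf), (idem_r H _ _ He). exact K. }
  assert (Hxx : idempotent m x).
  { unfold idempotent. transitivity (m (m (m f x) e) (m (m f x) e)).
    { rewrite Hx. reflexivity. }
    rewrite !(assoc H). rewrite K. exact Hx. }
  assert (Ex : m e f = x).
  { rewrite <- (idem_inv H x Hxx). rewrite Ex0, inv_inv. reflexivity. }
  rewrite Ex. exact Hxx.
Qed.

Lemma idem_comm {S} {m : S -> S -> S} (H : is_inverse_semigroup m) e f :
  idempotent m e -> idempotent m f -> m e f = m f e.
Proof.
  intros He Hf.
  pose proof (idem_mul H e f He Hf) as Hef.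
  pose proof (idem_mul H f e Hf He) as Hfe.
  unfold idempotent in Hef, Hfe. rewrite (assoc H) in Hef, Hfe.
  rewrite <- (idem_inv H (m e f)) by (unfold idempotent; rewrite (assoc H); exact Hef).
  symmetry. apply inv_uniq.
  - rewrite !(assoc H). rewrite (idem_r H _ _ Hf), (idem_r H _ _ He). exact Hef.
  - rewrite !(assoc H). rewrite (idem_r H _ _ He), (idem_r H _ _ Hf). exact Hfe.
Qed.

Lemma idem_ll {S} {m : S -> S -> S} (H : is_inverse_semigroup m) t :
  idempotent m (m (inv H t) t).
Proof. unfold idempotent. rewrite !(assoc H), inv_l2. reflexivity. Qed.
Lemma idem_rr {S} {m : S -> S -> S} (H : is_inverse_semigroup m) t :
  idempotent m (m t (inv H t)).
Proof. unfold idempotent. rewrite !(assoc H), inv_l1. reflexivity. Qed.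

Lemma inv_mul {S} {m : S -> S -> S} (H : is_inverse_semigroup m) s t :
  inv H (m s t) = m (inv H t) (inv H s).
Proof.
  symmetry. apply inv_uniq.
  - rewrite !(assoc H).
    assert (E : m (m (m (m (m s t) (inv H t)) (inv H s)) s) t
               = m (m s (m (m t (inv H t)) (m (inv H s) s))) t)
      by (rewrite !(assoc H); reflexivity).
    rewrite E, (idem_comm H _ _ (idem_rr H t) (idem_ll H s)).
    rewrite !(assoc H), inv_l1, l1'. reflexivity.
  - rewrite !(assoc H).
    assert (E : m (m (m (m (m (inv H t) (inv H s)) s) t) (inv H t)) (inv H s)
               = m (m (inv H t) (m (m (inv H s) s) (m t (inv H t)))) (inv H s))
      by (rewrite !(assoc H); reflexivity).
    rewrite E, (idem_comm H _ _ (idem_ll H s) (idem_rr H t)).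
    rewrite !(assoc H), inv_l2, l2'. reflexivity.
Qed.

Lemma conj_idem {S} {m : S -> S -> S} (H : is_inverse_semigroup m) e c :
  idempotent m e -> idempotent m (m (m (inv H c) e) c).
Proof.
  intros He. unfold idempotent.
  assert (E : m (m (m (inv H c) e) c) (m (m (inv H c) e) c)
             = m (m (inv H c) (m e (m c (inv H c)))) (m e c))
    by (rewrite !(assoc H); reflexivity).
  rewrite E, (idem_comm H _ _ He (idem_rr H c)).
  assert (E2 : m (m (inv H c) (m (m c (inv H c)) e)) (m e c)
             = m (m (m (m (inv H c) c) (inv H c)) (m e e)) c)
    by (rewrite !(assoc H); reflexivity).
  rewrite E2, inv_l2. unfold idempotent in He. rewrite He. reflexivity.
Qed.

Lemma le_char {S} {m : S -> S -> S} (H : is_inverse_semigroup m) s t :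
  ileq m s t -> s = m t (m (inv H s) s).
Proof.
  intros [e [He ->]]. rewrite inv_mul, (idem_inv H e He).
  assert (E : m (m e (inv H t)) (m t e) = m (m e (m (inv H t) t)) e)
    by (rewrite !(assoc H); reflexivity).
  rewrite E, (idem_comm H _ _ He (idem_ll H t)).
  rewrite !(assoc H), inv_l1, (idem_r H _ _ He). reflexivity.
Qed.

Lemma le_refl {S} {m : S -> S -> S} (H : is_inverse_semigroup m) s : ileq m s s.
Proof. exists (m (inv H s) s). split; [apply idem_ll|]. rewrite (assoc H), inv_l1. reflexivity. Qed.

Lemma le_trans {S} {m : S -> S -> S} (H : is_inverse_semigroup m) a b c :
  ileq m a b -> ileq m b c -> ileq m a c.
Proof.
  intros [e [He ->]] [f [Hf ->]]. exists (m f e). split; [apply idem_mul; auto|].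
  rewrite (assoc H). reflexivity.
Qed.

Lemma le_idem {S} {m : S -> S -> S} (H : is_inverse_semigroup m) a b :
  ileq m a b -> idempotent m b -> idempotent m a.
Proof. intros [e [He ->]] Hb. apply idem_mul; auto. Qed.

Lemma le_mul_r {S} {m : S -> S -> S} (H : is_inverse_semigroup m) a b c :
  ileq m a b -> ileq m (m a c) (m b c).
Proof.
  intros [e [He ->]]. exists (m (m (inv H c) e) c). split; [apply conj_idem; auto|].
  assert (E : m (m b c) (m (m (inv H c) e) c) = m (m b (m (m c (inv H c)) e)) c)
    by (rewrite !(assoc H); reflexivity).
  rewrite E, (idem_comm H _ _ (idem_rr H c) He).
  rewrite !(assoc H), l1'. reflexivity.
Qed.

Lemma le_mul_l {S} {m : S -> S -> S} (H : is_inverse_semigroup m) a b c :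
  ileq m a b -> ileq m (m c a) (m c b).
Proof. intros [e [He ->]]. exists e. split; auto. rewrite (assoc H). reflexivity. Qed.

Lemma le_idem_r {S} {m : S -> S -> S} (H : is_inverse_semigroup m) d e :
  idempotent m e -> ileq m (m d e) d.
Proof. intros He. exists e. split; auto. Qed.

Lemma le_inv {S} {m : S -> S -> S} (H : is_inverse_semigroup m) a b :
  ileq m a b -> ileq m (inv H a) (inv H b).
Proof.
  intros [e [He ->]]. rewrite inv_mul, (idem_inv H e He).
  exists (m (m b e) (inv H b)). split.
  - pose proof (conj_idem H e (inv H b) He) as K. rewrite inv_inv in K. exact K.
  - assert (E : m (inv H b) (m (m b e) (inv H b)) = m (m (m (inv H b) b) e) (inv H b))
      by (rewrite !(assoc H); reflexivity).
    rewrite E, (idem_comm H _ _ (idem_ll H b) He).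
    rewrite !(assoc H), l2'. reflexivity.
Qed.

Lemma le_rr {S} {m : S -> S -> S} (H : is_inverse_semigroup m) a b :
  ileq m a b -> ileq m (m a (inv H a)) (m b (inv H b)).
Proof.
  intros [e [He ->]]. rewrite inv_mul, (idem_inv H e He).
  exists (m (m b e) (inv H b)). split.
  - pose proof (conj_idem H e (inv H b) He) as K. rewrite inv_inv in K. exact K.
  - rewrite !(assoc H), inv_l1, (idem_r H _ _ He). reflexivity.
Qed.

Lemma le_left_form {S} {m : S -> S -> S} (H : is_inverse_semigroup m) s t :
  ileq m s t -> s = m (m s (inv H s)) t.
Proof.
  intros [e [He ->]]. rewrite inv_mul, (idem_inv H e He).
  rewrite !(assoc H), (idem_r H _ _ He).
  assert (E : m (m (m t e) (inv H t)) t = m t (m e (m (inv H t) t)))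
    by (rewrite !(assoc H); reflexivity).
  rewrite E, (idem_comm H _ _ He (idem_ll H t)), !(assoc H), inv_l1. reflexivity.
Qed.

Lemma le_fixed {S} {m : S -> S -> S} (H : is_inverse_semigroup m) a b :
  ileq m a b -> idempotent m a -> m b a = a.
Proof.
  intros Hab Ha. pose proof (le_char H a b Hab) as K.
  rewrite (idem_inv H a Ha) in K. unfold idempotent in Ha. rewrite Ha in K. auto.
Qed.

Lemma directed_r {S} {m : S -> S -> S} (H : is_inverse_semigroup m) (D : S -> Prop) c :
  directed m D -> directed m (fun z => exists d, D d /\ z = m d c).
Proof.
  intros [[x Hx] Hd]. split. { exists (m x c), x. auto. }
  intros x' y' [d1 [H1 ->]] [d2 [H2 ->]].
  destruct (Hd d1 d2 H1 H2) as [z [Hz [L1 L2]]].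
  exists (m z c). split; [eauto | split; apply le_mul_r; auto].
Qed.

Lemma directed_inv {S} {m : S -> S -> S} (H : is_inverse_semigroup m) (D : S -> Prop) :
  directed m D -> directed m (fun z => exists d, D d /\ z = inv H d).
Proof.
  intros [[x Hx] Hd]. split. { exists (inv H x), x. auto. }
  intros x' y' [d1 [H1 ->]] [d2 [H2 ->]].
  destruct (Hd d1 d2 H1 H2) as [z [Hz [L1 L2]]].
  exists (inv H z). split; [eauto | split; apply le_inv; auto].
Qed.

Lemma sup_inv {S} {m : S -> S -> S} (H : is_inverse_semigroup m) (D : S -> Prop) y :
  is_sup_in m (allS (S:=S)) D y ->
  is_sup_in m (allS (S:=S)) (fun z => exists d, D d /\ z = inv H d) (inv H y).
Proof.
  intros [_ [Hub Hl]]. split; [exact I | split].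
  - intros z [d [Hd ->]]. apply le_inv, Hub, Hd.
  - intros z _ Hz. rewrite <- (inv_inv H z). apply le_inv. apply Hl; [exact I|].
    intros d Hd. rewrite <- (inv_inv H d). apply le_inv. apply Hz. exists d; split; auto.
Qed.

Lemma wb_inv {S} {m : S -> S -> S} (H : is_inverse_semigroup m) s t :
  way_below m s t -> way_below m (inv H s) (inv H t).
Proof.
  intros Hw D _ Hd y Hy Hle.
  assert (Hle' : ileq m t (inv H y)).
  { rewrite <- (inv_inv H t). apply le_inv. auto. }
  destruct (Hw _ (fun _ _ => I) (directed_inv H D Hd) _ (sup_inv H D y Hy) Hle')
    as [z [[d [Hd1 ->]] Hz]].
  exists d. split; auto. rewrite <- (inv_inv H d). apply le_inv. auto.
Qed.

Lemma wb_le {S} {m : S -> S -> S} (H : is_inverse_semigroup m) s t :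
  way_below m s t -> ileq m s t.
Proof.
  intros Hw.
  destruct (Hw (fun z => z = t) (fun _ _ => I)) with (s := t) as [d [-> Hd]]; auto.
  - split. { exists t; auto. } intros x y -> ->. exists t. split; auto. split; apply le_refl; auto.
  - split; [exact I | split]. { intros d ->. apply le_refl; auto. }
    intros y _ Hy. apply Hy. reflexivity.
  - apply le_refl; auto.
Qed.

Lemma W_fwd {S} {m : S -> S -> S} (H : is_inverse_semigroup m) :
  separately_scott_continuous m -> forall s t,
  way_below m s t -> way_below m (m s (inv H s)) (m t (inv H t)).
Proof.
  intros Hc s t Hw D _ Hd y Hy Hle.
  pose proof (Hc D Hd y Hy t) as Hs'.
  assert (Ht : ileq m t (m y t)).
  { pose proof (le_mul_r H _ _ t Hle) as K. rewrite inv_l1 in K. exact K. }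
  destruct (Hw _ (fun _ _ => I) (directed_r H D t Hd) _ Hs' Ht) as [z [[d [Hd1 ->]] Hsz]].
  exists d. split; auto.
  destruct Hy as [_ [Hub _]].
  assert (Hg : ileq m (m d (m t (inv H t))) (m t (inv H t))).
  { pose proof (le_mul_r H _ _ (m t (inv H t)) (Hub d Hd1)) as K.
    rewrite (le_fixed H _ _ Hle (idem_rr H t)) in K. exact K. }
  assert (Hgi : idempotent m (m d (m t (inv H t)))) by (eapply le_idem; eauto; apply idem_rr).
  assert (Hsg : ileq m s (m (m d (m t (inv H t))) t)).
  { assert (E : m (m d (m t (inv H t))) t = m d (m (m t (inv H t)) t))
      by (rewrite !(assoc H); reflexivity).
    rewrite E, inv_l1. exact Hsz. }
  eapply le_trans; [auto | apply (le_rr H _ _ Hsg) |].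
  rewrite inv_mul, (idem_inv H _ Hgi).
  assert (E : m (m (m d (m t (inv H t))) t) (m (inv H t) (m d (m t (inv H t))))
            = m (m d (m t (inv H t))) (m (m t (inv H t)) (m d (m t (inv H t)))))
    by (rewrite !(assoc H); reflexivity).
  rewrite E, (le_fixed H _ _ Hg Hgi), Hgi.
  apply le_idem_r; auto. apply idem_rr.
Qed.

Lemma W_bwd {S} {m : S -> S -> S} (H : is_inverse_semigroup m) :
  separately_scott_continuous m -> forall s t, ileq m s t ->
  way_below m (m s (inv H s)) (m t (inv H t)) -> way_below m s t.
Proof.
  intros Hc s t Hst Hw D _ Hd y Hy Hle.
  pose proof (Hc D Hd y Hy (inv H t)) as Hs'.
  pose proof (le_mul_r H _ _ (inv H t) Hle) as Hle'.
  destruct (Hw _ (fun _ _ => I) (directed_r H D (inv H t) Hd) _ Hs' Hle')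
    as [z [[d [Hd1 ->]] Hz]].
  exists d. split; auto.
  rewrite (le_left_form H s t Hst).
  apply le_trans with (m (m d (inv H t)) t); auto.
  - apply le_mul_r; auto.
  - rewrite <- (assoc H). apply le_idem_r; auto. apply idem_ll.
Qed.

Lemma E1 {S} {m : S -> S -> S} (H : is_inverse_semigroup m) :
  separately_scott_continuous m -> forall e f,
  idempotent m e -> idempotent m f -> way_below_idem m e f -> way_below m e f.
Proof.
  intros Hc e f He Hf Hw D _ Hd y Hy Hle.
  pose proof (Hc D Hd y Hy f) as Hs'.
  rewrite (le_fixed H _ _ Hle Hf) in Hs'.
  destruct Hy as [_ [Hub _]].
  assert (Hid : forall z, (exists d, D d /\ z = m d f) -> idempotent m z).
  { intros z [d [Hd1 ->]]. apply le_idem with f; auto.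
    pose proof (le_mul_r H _ _ f (Hub d Hd1)) as K.
    rewrite (le_fixed H _ _ Hle Hf) in K. exact K. }
  assert (Hsup : is_sup_in m (idempotent m) (fun z => exists d, D d /\ z = m d f) f).
  { destruct Hs' as [_ [Hub' Hl']]. split; [exact Hf | split; [exact Hub'|]].
    intros z _ Hz. apply Hl'; [exact I | exact Hz]. }
  destruct (Hw _ Hid (directed_r H D f Hd) f Hsup (le_refl H f)) as [z [[d [Hd1 ->]] Hz]].
  exists d. split; auto. apply le_trans with (m d f); auto. apply le_idem_r; auto.
Qed.

Lemma E2 {S} {m : S -> S -> S} (H : is_inverse_semigroup m) :
  mirror_semigroup m -> forall e f, way_below m e f -> way_below_idem m e f.
Proof.
  intros Hm e f Hw D HDi Hd x Hx Hle.
  destruct (Hm D HDi Hd (ex_intro _ x Hx)) as [y Hy].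
  destruct Hx as [Hxi [Hxub Hxl]].
  pose proof Hy as [_ [Hyub Hyl]].
  assert (Hyx : ileq m y x) by (apply Hyl; [exact I | exact Hxub]).
  assert (Hyi : idempotent m y) by (eapply le_idem; eauto).
  assert (Hxy : ileq m x y) by (apply Hxl; auto).
  apply (Hw D (fun _ _ => I) Hd y Hy (le_trans H _ _ _ Hle Hxy)).
Qed.

Lemma conj_rr {S} {m : S -> S -> S} (H : is_inverse_semigroup m) e a :
  idempotent m e -> m (m e a) (inv H (m e a)) = m e (m a (inv H a)).
Proof.
  intros He. rewrite inv_mul, (idem_inv H e He).
  assert (E : m (m e a) (m (inv H a) e) = m (m e (m a (inv H a))) e)
    by (rewrite !(assoc H); reflexivity).
  rewrite E, <- (assoc H), (idem_comm H _ _ (idem_rr H a) He), (assoc H), He. reflexivity.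
Qed.

Lemma conj2 {S} {m : S -> S -> S} (H : is_inverse_semigroup m) s s' :
  m (m s s') (inv H (m s s')) =
  m (m s (m s' (inv H s'))) (inv H (m s (m s' (inv H s')))).
Proof.
  rewrite (inv_mul H s (m s' (inv H s'))), (idem_inv H _ (idem_rr H s')), inv_mul.
  assert (E : m (m s (m s' (inv H s'))) (m (m s' (inv H s')) (inv H s))
            = m (m s (m (m s' (inv H s')) (m s' (inv H s')))) (inv H s))
    by (rewrite !(assoc H); reflexivity).
  rewrite E, (idem_rr H s'), !(assoc H). reflexivity.
Qed.

Theorem proposition4p6 (S : Type) (mul : S -> S -> S) :
  is_inverse_semigroup mul ->
  mirror_semigroup mul ->
  separately_scott_continuous mul ->
  (multiplicative_on mul (allS (S:=S)) (way_below mul) <->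
   multiplicative_on mul (idempotent mul) (way_below_idem mul)).
Proof.
  intros H Hm Hc. split.
  - intros Hmul e f e' f' He Hf He' Hf' H1 H2.
    apply (E2 H Hm). apply Hmul; try exact I; apply (E1 H Hc); auto.
  - intros Hmul.
    assert (Mi : forall e f e' f', idempotent mul e -> idempotent mul f ->
              idempotent mul e' -> idempotent mul f' ->
              way_below mul e f -> way_below mul e' f' ->
              way_below mul (mul e e') (mul f f')).
    { intros e f e' f' He Hf He' Hf' H1 H2.
      apply (E1 H Hc); try apply idem_mul; auto.
      apply Hmul; auto; apply (E2 H Hm); auto. }
    assert (R : forall a b e f, idempotent mul e -> idempotent mul f ->
              way_below mul a b -> way_below mul e f ->
              way_below mul (mul e a) (mul f b)).
    { intros a b e f He Hf Hab Hef.
      apply (W_bwd H Hc).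
      - apply le_trans with (mul e b); auto.
        + apply le_mul_l; auto. apply (wb_le H); auto.
        + apply le_mul_r; auto. apply (wb_le H); auto.
      - rewrite (conj_rr H e a He), (conj_rr H f b Hf).
        apply Mi; auto; try apply idem_rr. apply (W_fwd H Hc); auto. }
    assert (R' : forall a b e f, idempotent mul e -> idempotent mul f ->
              way_below mul a b -> way_below mul e f ->
              way_below mul (mul a e) (mul b f)).
    { intros a b e f He Hf Hab Hef.
      pose proof (wb_inv H _ _ (R _ _ _ _ He Hf (wb_inv H _ _ Hab) Hef)) as K.
      rewrite !inv_mul, !inv_inv, (idem_inv H e He), (idem_inv H f Hf) in K. exact K. }
    intros s t s' t' _ _ _ _ H1 H2.
    apply (W_bwd H Hc).
    + apply le_trans with (mul t s'); auto.
      * apply le_mul_r; auto. apply (wb_le H); auto.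
      * apply le_mul_l; auto. apply (wb_le H); auto.
    + rewrite (conj2 H s s'), (conj2 H t t').
      apply (W_fwd H Hc). apply R'; try apply idem_rr; auto.
      apply (W_fwd H Hc); auto.
Qed.
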